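(* In the $\mathbf N$-agent system with dependence on marginal distributions described in the context, let $\{\boldsymbol\mu_t^{\mathbf N},\boldsymbol\nu_t^{\mathbf N}\}_{t\ge0}$ be the empirical joint state and action distributions induced by a policy $\boldsymbol\pi=\{\boldsymbol\pi_t\}_{t\ge0}$. Then for every $t\ge0$: (a) $\mathbb E|\boldsymbol\nu_t^{\mathbf N}[\mathcal U]-\nu^{\mathrm{MF}}(\boldsymbol\mu_t^{\mathbf N},\boldsymbol\pi_t)[\mathcal U]|_1\le\frac1{\sqrt{N_{\mathrm{pop}}}}\sqrt{|\mathcal U|}$; (b) $\mathbb E\Big|\frac1{N_{\mathrm{pop}}}\sum_{k\in[K]}\sum_{j=1}^{N_k}r_k(x_{j,k}^t,u_{j,k}^t,\boldsymbol\mu_t^{\mathbf N}[\mathcal X],\boldsymbol\nu_t^{\mathbf N}[\mathcal U])-\sum_{k\in[K]}r_k^{\mathrm{MF}}(\boldsymbol\mu_t^{\mathbf N},\boldsymbol\pi_t)\Big|\le\frac{C_R}{\sqrt{N_{\mathrm{pop}}}}\sqrt{|\mathcal U|}$; (c) $\mathbb E|\boldsymbol\mu_{t+1}^{\mathbf N}[\mathcal X]-P^{\mathrm{MF}}(\boldsymbol\mu_t^{\mathbf N},\boldsymbol\pi_t)[\mathcal X]|_1\le\frac{C_P}{\sqrt{N_{\mathrm{pop}}}}\sqrt{|\mathcal X||\mathcal U|}$, where $C_R=M_R+L_R$ and $C_P=2+L_P$.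
   Context: Fix $K\ge1$, $N_1,\dots,N_K\ge1$, $[K]=\{1,\dots,K\}$, $N_{\mathrm{pop}}=\sum_kN_k$, finite sets $\mathcal X,\mathcal U$, $\mathcal P(A)$ the probability distributions on $A$, $|\cdot|_1$ the $L_1$ norm, constants $M_R,L_R,L_P>0$. Agent $j\in[N_k]$ of class $k$ has state $x_{j,k}^t$ and action $u_{j,k}^t$; $\boldsymbol\mu_t^{\mathbf N}(x,k)=\frac1{N_{\mathrm{pop}}}\sum_{j=1}^{N_k}\mathbf 1(x_{j,k}^t=x)$, $\boldsymbol\nu_t^{\mathbf N}(u,k)=\frac1{N_{\mathrm{pop}}}\sum_{j=1}^{N_k}\mathbf 1(u_{j,k}^t=u)$; marginals $\boldsymbol\mu[\mathcal X](x)=\sum_k\boldsymbol\mu(x,k)$, $\boldsymbol\nu[\mathcal U](u)=\sum_k\boldsymbol\nu(u,k)$. For each $k$: $r_k:\mathcal X\times\mathcal U\times\mathcal P(\mathcal X)\times\mathcal P(\mathcal U)\to\mathbb R$, $P_k:\mathcal X\times\mathcal U\times\mathcal P(\mathcal X)\times\mathcal P(\mathcal U)\to\mathcal P(\mathcal X)$ with $|r_k|\le M_R$, $|r_k(x,u,\mu_1,\nu_1)-r_k(x,u,\mu_2,\nu_2)|\le L_R(|\mu_1-\mu_2|_1+|\nu_1-\nu_2|_1)$, $|P_k(x,u,\mu_1,\nu_1)-P_k(x,u,\mu_2,\nu_2)|_1\le L_P(|\mu_1-\mu_2|_1+|\nu_1-\nu_2|_1)$. A policy is $\boldsymbol\pi=\{\boldsymbol\pi_t\}_{t\ge0}$,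 $\boldsymbol\pi_t=(\pi_k^t)_k$, $\pi_k^t:\mathcal X\times\mathcal P(\mathcal X)\to\mathcal P(\mathcal U)$. Dynamics: conditioned on all states at time $t$, actions are independent across agents with $u_{j,k}^t\sim\pi_k^t(x_{j,k}^t,\boldsymbol\mu_t^{\mathbf N}[\mathcal X])$; conditioned on states and actions, next states are independent with $x_{j,k}^{t+1}\sim P_k(x_{j,k}^t,u_{j,k}^t,\boldsymbol\mu_t^{\mathbf N}[\mathcal X],\boldsymbol\nu_t^{\mathbf N}[\mathcal U])$. Mean-field operators: $\nu^{\mathrm{MF}}(\boldsymbol\mu,\boldsymbol\pi)(u,k)=\sum_x\pi_k(x,\boldsymbol\mu[\mathcal X])(u)\boldsymbol\mu(x,k)$; $P^{\mathrm{MF}}(\boldsymbol\mu,\boldsymbol\pi)(x',k)=\sum_{x,u}\boldsymbol\mu(x,k)\pi_k(x,\boldsymbol\mu[\mathcal X])(u)P_k(x,u,\boldsymbol\mu[\mathcal X],\nu^{\mathrm{MF}}(\boldsymbol\mu,\boldsymbol\pi)[\mathcal U])(x')$; $r_k^{\mathrm{MF}}(\boldsymbol\mu,\boldsymbol\pi)=\sum_{x,u}\boldsymbol\mu(x,k)\pi_k(x,\boldsymbol\mu[\mathcal X])(u)r_k(x,u,\boldsymbol\mu[\mathcal X],\nu^{\mathrm{MF}}(\boldsymbol\mu,\boldsymbol\pi)[\mathcal U])$. *)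

(* Defs.v *)
(* Finite N-agent multi-class system, all laws are explicit
   finite sums (everything is finite: agents, states, actions). *)
From HB Require Import structures.
From mathcomp Require Import all_boot all_order all_algebra.
Import Order.TTheory GRing.Theory Num.Theory.
Local Open Scope ring_scope.

Section MFDefs.
Context {R : rcfType} {X U : finType} {K : nat} {N : 'I_K -> nat}.

Definition Agent := {k : 'I_K & 'I_(N k)}.

Definition Npop : nat := \sum_(k < K) N k.

Definition is_prob {T : finType} (p : {ffun T -> R}) : Prop :=
  (forall y, 0 <= p y) /\ \sum_y p y = 1.

Definition l1dist {T : finType} (f g : {ffun T -> R}) : R :=
  \sum_y `|f y - g y|.

Definition emp {T : finType} (c : {ffun Agent -> T}) : {ffun T * 'I_K -> R} :=
  [ffun yk : T * 'I_K =>
     (#|[set j : 'I_(N yk.2) | c (Tagged (fun k => 'I_(N k)) j) == yk.1]|)%:R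
       / (Npop%:R)].

Definition marg {T : finType} (m : {ffun T * 'I_K -> R}) : {ffun T -> R} :=
  [ffun y => \sum_(k < K) m (y, k)].

Definition policy_t := 'I_K -> X -> {ffun X -> R} -> {ffun U -> R}.
Definition reward_t := 'I_K -> X -> U -> {ffun X -> R} -> {ffun U -> R} -> R.
Definition kernel_t :=
  'I_K -> X -> U -> {ffun X -> R} -> {ffun U -> R} -> {ffun X -> R}.

Definition nuMF (pi : policy_t) (m : {ffun X * 'I_K -> R}) : {ffun U * 'I_K -> R} :=
  [ffun uk : U * 'I_K => \sum_x pi uk.2 x (marg m) uk.1 * m (x, uk.2)].

Definition PMF (P : kernel_t) (pi : policy_t) (m : {ffun X * 'I_K -> R})
  : {ffun X * 'I_K -> R} :=
  [ffun xk : X * 'I_K => \sum_x \sum_u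
     m (x, xk.2) * pi xk.2 x (marg m) u
       * P xk.2 x u (marg m) (marg (nuMF pi m)) xk.1].

Definition rMF (r : reward_t) (pi : policy_t) (m : {ffun X * 'I_K -> R}) (k : 'I_K) : R :=
  \sum_x \sum_u m (x, k) * pi k x (marg m) u * r k x u (marg m) (marg (nuMF pi m)).

Definition act_prob (pi : policy_t) (s : {ffun Agent -> X}) (a : {ffun Agent -> U}) : R :=
  \prod_(i : Agent) pi (tag i) (s i) (marg (emp s)) (a i).

Definition trans_prob (P : kernel_t) (s : {ffun Agent -> X}) (a : {ffun Agent -> U})
  (s' : {ffun Agent -> X}) : R :=
  \prod_(i : Agent) P (tag i) (s i) (a i) (marg (emp s)) (marg (emp a)) (s' i).

Fixpoint law (P : kernel_t) (pi : nat -> policy_t) (p0 : {ffun {ffun Agent -> X} -> R})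
  (t : nat) : {ffun {ffun Agent -> X} -> R} :=
  match t with
  | 0 => p0
  | t'.+1 => [ffun s' : {ffun Agent -> X} =>
      \sum_(s : {ffun Agent -> X}) law P pi p0 t' s *
        \sum_(a : {ffun Agent -> U}) act_prob (pi t') s a * trans_prob P s a s']
  end.

End MFDefs.

(* Main.v *)
Require Import Defs.
From HB Require Import structures.
From mathcomp Require Import all_boot all_order all_algebra.
From mathcomp Require Import ring lra.
Import Order.TTheory GRing.Theory Num.Theory.
Local Open Scope ring_scope.

Section Prod.
Variables (R : rcfType) (I T : finType) (q : I -> T -> R).
Hypothesis q0 : forall i t, 0 <= q i t.
Hypothesis q1 : forall i, \sum_t q i t = 1.

Definition pw (a : {ffun I -> T}) := \prod_i q i (a i).

Lemma pw_ge0 a : 0 <= pw a.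
Proof. by apply: prodr_ge0 => i _; apply: q0. Qed.

Lemma pw_sum : \sum_a pw a = 1.
Proof. by rewrite /pw -bigA_distr_bigA /=; apply: big1 => i _; apply: q1. Qed.

Lemma pw_prod (G : I -> T -> R) :
  \sum_a pw a * \prod_i G i (a i) = \prod_i \sum_t q i t * G i t.
Proof. by rewrite bigA_distr_bigA; apply: eq_bigr => a _; rewrite /pw -big_split. Qed.

Lemma prod_if1 (F : I -> R) i : \prod_j (if j == i then F j else 1) = F i.
Proof. by rewrite -big_mkcond big_pred1_eq. Qed.

Lemma pw_marg i (g : T -> R) : \sum_a pw a * g (a i) = \sum_t q i t * g t.
Proof.
have := pw_prod (fun j t => if j == i then g t else 1).
have -> : \sum_a pw a * \prod_j (if j == i then g (a j) else 1) = \sum_a pw a * g (a i).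
  by apply: eq_bigr => a _; rewrite (prod_if1 (fun j => g (a j))).
move=> ->; rewrite (bigD1 i) //= eqxx.
rewrite [X in _ * X](_ : _ = 1) ?mulr1 //.
apply: big1 => j /negbTE ->.
by under eq_bigr do rewrite mulr1; apply: q1.
Qed.

Lemma pw_pair0 i i' (g h : T -> R) : i != i' -> \sum_t q i t * g t = 0 ->
  \sum_a pw a * (g (a i) * h (a i')) = 0.
Proof.
move=> ne g0.
have := pw_prod (fun j t => (if j == i then g t else 1) * (if j == i' then h t else 1)).
have -> : \sum_a pw a * \prod_j ((if j == i then g (a j) else 1) * (if j == i' then h (a j) else 1)) = \sum_a pw a * (g (a i) * h (a i')).
  by apply: eq_bigr => a _; rewrite big_split /= (prod_if1 (fun j => g (a j)))
  (prod_if1 (fun j => h (a j))).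
move=> ->; rewrite (bigD1 i) //= eqxx (negbTE ne).
under eq_bigr do rewrite mulr1.
by rewrite g0 mul0r.
Qed.

Lemma pw_var (f : I -> T -> R) :
  \sum_a pw a * (\sum_i (f i (a i) - \sum_t q i t * f i t)) ^+ 2
  <= \sum_i \sum_t q i t * f i t ^+ 2.
Proof.
set m := fun i => \sum_t q i t * f i t.
set g := fun i t => f i t - m i.
have g0 i : \sum_t q i t * g i t = 0.
  rewrite /g; under eq_bigr do rewrite mulrBr.
  by rewrite sumrB -mulr_suml q1 mul1r subrr.
have E : forall a, (\sum_i (f i (a i) - m i)) ^+ 2 =
   \sum_i \sum_i' g i (a i) * g i' (a i').
  by move=> a; rewrite expr2 mulr_suml; apply: eq_bigr => i _; rewrite mulr_sumr.
under eq_bigr do rewrite E mulr_sumr.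
rewrite exchange_big /=; apply: ler_sum => i _.
under eq_bigr do rewrite mulr_sumr.
rewrite exchange_big /= [X in X <= _](bigD1 i) //=.
rewrite [X in _ + X]big1 ?addr0; last first.
  by move=> j ji; apply: pw_pair0; rewrite // eq_sym.
rewrite (pw_marg i (fun t => g i t * g i t)).
have -> : \sum_t q i t * (g i t * g i t) = \sum_t q i t * f i t ^+ 2 - m i ^+ 2.
  have -> : \sum_t q i t * (g i t * g i t) =
     \sum_t q i t * f i t ^+ 2 - (m i *+ 2) * \sum_t q i t * f i t + m i ^+ 2 * \sum_t q i t.
    rewrite !mulr_sumr -!sumrB -big_split /=; apply: eq_bigr => t _; rewrite /g; ring.
  by rewrite q1 -/(m i); ring.
by rewrite lerBlDr lerDl sqr_ge0.
Qed.
End Prod.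
Arguments pw {R I T} q a.
Lemma conc (R : rcfType) (A J : finType) (w : A -> R) (Z : J -> A -> R) (b sN : R) :
 (forall a, 0 <= w a) -> \sum_a w a = 1 -> 0 < b -> 0 < sN -> (0 < #|J|)%N ->
 \sum_j \sum_a w a * Z j a ^+ 2 <= b^+2 / sN^+2 ->
 \sum_a w a * \sum_j `|Z j a| <= b * Num.sqrt (#|J|%:R) / sN.
Proof.
move=> w0 w1 b0 sN0 J0 HS.
set n := #|J|%:R; set sn := Num.sqrt n.
have n0 : 0 < n by rewrite ltr0n.
have sn0 : 0 < sn by rewrite sqrtr_gt0.
have snE : sn ^+ 2 = n by rewrite sqr_sqrtr // ltW.
set c := b / (sn * sN).
have c0 : 0 < c by rewrite divr_gt0 // mulr_gt0.
have pt z : `|z| <= (z ^+ 2 / c + c) / 2.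
  rewrite -subr_ge0 -(real_normK (num_real z)).
  have -> : (`|z| ^+ 2 / c + c) / 2 - `|z| = (`|z| - c) ^+ 2 / (2 * c).
    by field; rewrite gt_eqF.
  by rewrite divr_ge0 ?sqr_ge0 // mulr_ge0 // ltW.
apply: (le_trans (y := \sum_a w a * \sum_j (Z j a ^+ 2 / c + c) / 2)).
  apply: ler_sum => a _; apply: ler_wpM2l => //; apply: ler_sum => j _; exact: pt.
have -> : \sum_a w a * \sum_j (Z j a ^+ 2 / c + c) / 2 =
   (\sum_j \sum_a w a * Z j a ^+ 2) / (2 * c) + n * c / 2.
  have -> : \sum_a w a * \sum_j (Z j a ^+ 2 / c + c) / 2 =
     \sum_j \sum_a (w a * Z j a ^+ 2 / (2 * c) + w a * (c / 2)).
    rewrite exchange_big /=; apply: eq_bigr => a _; rewrite mulr_sumr.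
    by apply: eq_bigr => j _; field; rewrite gt_eqF.
  rewrite mulr_suml; under eq_bigr do rewrite big_split /= -!mulr_suml w1 mul1r.
  rewrite big_split /= -mulr_suml sumr_const -/n; congr (_ + _).
  by rewrite mulr_natl -mulr_natr; ring.
apply: (le_trans (y := b ^+ 2 / sN ^+ 2 / (2 * c) + n * c / 2)).
  by rewrite lerD2r ler_wpM2r // invr_ge0 mulr_ge0 // ltW.
rewrite le_eqVlt; apply/orP; left; apply/eqP.
rewrite /c -snE; field.
by rewrite !gt_eqF.
Qed.
Section Model.
Variables (R : rcfType) (K : nat) (N : 'I_K -> nat).
Local Notation Ag := (@Agent K N).
Local Notation Np := ((@Npop K N)%:R : R).
Hypothesis Np0 : (0 < @Npop K N)%N.

Lemma sum_agent (G : Ag -> R) :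
  \sum_k \sum_(j : 'I_(N k)) G (Tagged (fun k => 'I_(N k)) j) = \sum_i G i.
Proof.
have := @sig_big_dep _ 0 +%R _ (fun k => 'I_(N k)) xpredT (fun _ => xpredT)
  (fun k j => G (Tagged (fun k => 'I_(N k)) j)).
by move=> /= ->; apply: eq_bigr => -[k j].
Qed.

Lemma sum_agent1 : \sum_(i : Ag) (1 : R) = Np.
Proof.
rewrite -sum_agent /Npop natr_sum; apply: eq_bigr => k _.
by rewrite sumr_const card_ord.
Qed.

Lemma emp_sum (T : finType) (c : {ffun Ag -> T}) (F : 'I_K -> T -> R) :
  \sum_k \sum_x (@emp R K N T c) (x, k) * F k x = Np^-1 * \sum_i F (tag i) (c i).
Proof.
rewrite -sum_agent mulr_sumr; apply: eq_bigr => k _.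
rewrite mulr_sumr.
under eq_bigr do rewrite ffunE /= mulrAC.
rewrite -mulr_suml mulrC -mulr_sumr; congr (_ * _).
transitivity (\sum_x \sum_(j : 'I_(N k)) ((c (Tagged (fun k => 'I_(N k)) j) == x)%:R * F k x)).
  apply: eq_bigr => x _; rewrite -mulr_suml; congr (_ * _).
  rewrite -sum1dep_card natr_sum big_mkcond /=; apply: eq_bigr => j _.
  by case: (_ == _).
rewrite exchange_big /=; apply: eq_bigr => j _.
rewrite (bigD1 (c (Tagged (fun k => 'I_(N k)) j))) //= eqxx mul1r big1 ?addr0 //.
by move=> x; rewrite eq_sym => /negbTE ->; rewrite mul0r.
Qed.

Arguments emp_sum {T}.
Lemma Np_gt0 : 0 < Np. Proof. by rewrite ltr0n. Qed.
Lemma Np_neq0 : Np != 0. Proof. by rewrite gt_eqF // Np_gt0. Qed.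

Lemma sum_ind (T : finType) (t0 : T) : \sum_y ((t0 == y)%:R : R) = 1.
Proof.
rewrite (bigD1 t0) //= eqxx big1 ?addr0 // => y.
by rewrite eq_sym => /negbTE ->.
Qed.

Lemma sum_indl (T : finType) (t0 : T) (F : T -> R) : \sum_y (t0 == y)%:R * F y = F t0.
Proof.
rewrite (bigD1 t0) //= eqxx mul1r big1 ?addr0 // => y.
by rewrite eq_sym => /negbTE ->; rewrite mul0r.
Qed.

Lemma marg_emp (T : finType) (c : {ffun Ag -> T}) y :
  marg (@emp R K N T c) y = Np^-1 * \sum_i (c i == y)%:R.
Proof.
rewrite ffunE -(emp_sum c (fun _ x => (x == y)%:R)); apply: eq_bigr => k _.
rewrite (bigD1 y) //= eqxx mulr1 big1 ?addr0 // => x /negbTE ->.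
by rewrite mulr0.
Qed.

Lemma marg_emp_prob (T : finType) (c : {ffun Ag -> T}) : is_prob (marg (@emp R K N T c)).
Proof.
split=> [y|].
  by rewrite marg_emp mulr_ge0 ?invr_ge0 ?ler0n // sumr_ge0 // => i _; rewrite ler0n.
under eq_bigr do rewrite marg_emp.
rewrite -mulr_sumr exchange_big /=.
under eq_bigr do rewrite sum_ind.
by rewrite sum_agent1 mulVf // Np_neq0.
Qed.

Arguments marg_emp_prob {T}.
Arguments marg_emp {T}.
Variables X U : finType.

Lemma marg_nu (pi : @policy_t R X U K) (s : {ffun Ag -> X}) u :
 marg (nuMF pi (@emp R K N X s)) u = Np^-1 * \sum_i pi (tag i) (s i) (marg (emp s)) u.
Proof.
rewrite ffunE -(emp_sum s (fun k x => pi k x (marg (emp s)) u)); apply: eq_bigr => k _.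
by rewrite ffunE /=; apply: eq_bigr => x _; rewrite mulrC.
Qed.

Lemma marg_nu_prob (pi : @policy_t R X U K) (s : {ffun Ag -> X}) :
  (forall k x m, is_prob m -> is_prob (pi k x m)) ->
  is_prob (marg (nuMF pi (@emp R K N X s))).
Proof.
move=> hpi; have mp := marg_emp_prob s.
split=> [u|].
  rewrite marg_nu mulr_ge0 ?invr_ge0 ?ler0n // sumr_ge0 // => i _.
  by case: (hpi (tag i) (s i) _ mp) => ->.
under eq_bigr do rewrite marg_nu.
rewrite -mulr_sumr exchange_big /=.
under eq_bigr => i _ do case: (hpi (tag i) (s i) _ mp) => _ ->.
by rewrite sum_agent1 mulVf // Np_neq0.
Qed.

Lemma rMF_sum (r : @reward_t R X U K) (pi : @policy_t R X U K) (s : {ffun Ag -> X}) :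
  \sum_k rMF r pi (@emp R K N X s) k = Np^-1 * \sum_i \sum_u
    pi (tag i) (s i) (marg (emp s)) u *
      r (tag i) (s i) u (marg (emp s)) (marg (nuMF pi (emp s))).
Proof.
rewrite -(emp_sum s (fun k x => \sum_u pi k x (marg (emp s)) u * r k x u (marg (emp s)) (marg (nuMF pi (emp s))))).
apply: eq_bigr => k _; rewrite /rMF; apply: eq_bigr => x _.
by rewrite mulr_sumr; apply: eq_bigr => u _; rewrite mulrA.
Qed.

Lemma PMF_marg (P : @kernel_t R X U K) (pi : @policy_t R X U K) (s : {ffun Ag -> X}) x' :
  marg (PMF P pi (@emp R K N X s)) x' = Np^-1 * \sum_i \sum_u
    pi (tag i) (s i) (marg (emp s)) u *
      P (tag i) (s i) u (marg (emp s)) (marg (nuMF pi (emp s))) x'.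
Proof.
rewrite ffunE -(emp_sum s (fun k x => \sum_u pi k x (marg (emp s)) u * P k x u (marg (emp s)) (marg (nuMF pi (emp s))) x')).
apply: eq_bigr => k _; rewrite ffunE /=; apply: eq_bigr => x _.
by rewrite mulr_sumr; apply: eq_bigr => u _; rewrite mulrA.
Qed.

End Model.

Lemma conc_pw (R : rcfType) (I T J : finType) (q : I -> T -> R) (f : J -> I -> T -> R) (b M : R) :
 (forall i t, 0 <= q i t) -> (forall i, \sum_t q i t = 1) -> 0 < b -> 0 < M -> (0 < #|J|)%N ->
 \sum_j \sum_i \sum_t q i t * f j i t ^+ 2 <= b ^+ 2 * M ->
 \sum_a pw q a * \sum_j `|M^-1 * \sum_i (f j i (a i) - \sum_t q i t * f j i t)|
   <= b * Num.sqrt #|J|%:R / Num.sqrt M.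
Proof.
move=> q0 q1 b0 M0 J0 HS.
apply: (@conc R _ J (pw q) (fun j a => M^-1 * \sum_i (f j i (a i) - \sum_t q i t * f j i t)) b (Num.sqrt M)) => //.
- by move=> a; apply: pw_ge0.
- exact: pw_sum.
- by rewrite sqrtr_gt0.
rewrite sqr_sqrtr; last exact: ltW.
under eq_bigr do under eq_bigr do rewrite exprMn mulrCA.
under eq_bigr do rewrite -mulr_sumr.
rewrite -mulr_sumr.
apply: (le_trans (y := M^-1 ^+ 2 * (b ^+ 2 * M))).
  rewrite ler_wpM2l ?sqr_ge0 //; apply: le_trans HS; apply: ler_sum => j _.
  exact: pw_var.
rewrite le_eqVlt; apply/orP; left; apply/eqP; field; rewrite gt_eqF //.
Qed.
Section Main.
Variables (R : rcfType) (X U : finType) (K : nat) (N : 'I_K -> nat).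
Local Notation Ag := (@Agent K N).
Local Notation Np := ((@Npop K N)%:R : R).
Hypothesis Np0 : (0 < @Npop K N)%N.

Lemma nonempty_of_prob (T : finType) (p : {ffun T -> R}) : is_prob p -> (0 < #|T|)%N.
Proof.
case=> _ p1; case: (pickP (fun _ : T => true)) => [u _|H]; first by apply/card_gt0P; exists u.
by move: p1; rewrite big_pred0 // => /eqP; rewrite eq_sym oner_eq0.
Qed.

Lemma agent_ex : exists i0 : Ag, true.
Proof.
case: (pickP (fun _ : Ag => true)) => [i _|H]; first by exists i.
have := @sum_agent1 R K N; rewrite big_pred0 // => /eqP.
by rewrite eq_sym (negbTE (@Np_neq0 R K N Np0)).
Qed.

Lemma sum_indr (T : finType) (t0 : T) (F : T -> R) : \sum_y F y * (y == t0)%:R = F t0.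
Proof.
by under eq_bigr do rewrite mulrC eq_sym; apply: sum_indl.
Qed.

Lemma ind2 (b : bool) : (b%:R : R) ^+ 2 = b%:R.
Proof. by case: b; rewrite ?expr1n ?expr0n. Qed.

Lemma part_a_s (pit : @policy_t R X U K)
  (hpi : forall k x m, is_prob m -> is_prob (pit k x m)) (s : {ffun Ag -> X}) :
 \sum_a act_prob pit s a * l1dist (marg (@emp R K N U a)) (marg (nuMF pit (emp s)))
   <= Num.sqrt #|U|%:R / Num.sqrt Np.
Proof.
set mu := marg (@emp R K N X s).
set q := fun i u => pit (tag i) (s i) mu u.
have mp : is_prob mu by apply: marg_emp_prob.
have q0 i u : 0 <= q i u by case: (hpi (tag i) (s i) mu mp) => h _; apply: h.
have q1 i : \sum_u q i u = 1 by case: (hpi (tag i) (s i) mu mp).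
have [i0 _] := agent_ex.
have U0 : (0 < #|U|)%N := nonempty_of_prob _ _ (hpi (tag i0) (s i0) mu mp).
have E : forall a : {ffun Ag -> U}, l1dist (marg (@emp R K N U a)) (marg (nuMF pit (emp s)))
   = \sum_u `|Np^-1 * \sum_i ((fun u i t => ((t == u)%:R : R)) u i (a i)
        - \sum_t q i t * (fun u i t => ((t == u)%:R : R)) u i t)|.
  move=> a; apply: eq_bigr => u _.
  rewrite marg_emp // marg_nu //= -mulrBr sumrB; congr (`|_ * (_ - _)|).
  by apply: eq_bigr => i _; rewrite sum_indr.
under eq_bigr do rewrite E.
have := @conc_pw R Ag U U q (fun u i t => ((t == u)%:R : R)) 1 Np q0 q1 ltr01 (@Np_gt0 R K N Np0) U0.
rewrite mul1r => H; apply: le_trans (H _); first by rewrite le_eqVlt eqxx.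
under eq_bigr do under eq_bigr do under eq_bigr do rewrite ind2.
rewrite exchange_big /= expr1n mul1r -(@sum_agent1 R K N); apply: ler_sum => i _.
rewrite exchange_big /=.
under eq_bigr do rewrite -mulr_sumr sum_ind mulr1.
by rewrite q1.
Qed.

Lemma sqrt_ge1 (T : finType) : (0 < #|T|)%N -> 1 <= Num.sqrt (#|T|%:R : R).
Proof. by move=> T0; rewrite -[X in X <= _]sqrtr1 ler_wsqrtr // ler1n. Qed.

Lemma part_b_s (pit : @policy_t R X U K)
  (hpi : forall k x m, is_prob m -> is_prob (pit k x m))
  (r : @reward_t R X U K) (MR LR : R) (MR0 : 0 < MR) (LR0 : 0 < LR)
  (hrb : forall k x u (m : {ffun X -> R}) (n : {ffun U -> R}),
      is_prob m -> is_prob n -> `|r k x u m n| <= MR)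
  (hrL : forall k x u (m1 m2 : {ffun X -> R}) (n1 n2 : {ffun U -> R}),
      is_prob m1 -> is_prob n1 -> is_prob m2 -> is_prob n2 ->
      `|r k x u m1 n1 - r k x u m2 n2| <= LR * (l1dist m1 m2 + l1dist n1 n2))
  (s : {ffun Ag -> X}) :
  \sum_a act_prob pit s a *
       `| Np^-1 * \sum_i r (tag i) (s i) (a i) (marg (@emp R K N X s)) (marg (@emp R K N U a))
          - \sum_k rMF r pit (emp s) k |
     <= (MR + LR) * Num.sqrt #|U|%:R / Num.sqrt Np.
Proof.
set mu := marg (@emp R K N X s).
set nu0 := marg (nuMF pit (@emp R K N X s)).
set q := fun i u => pit (tag i) (s i) mu u.
have mp : is_prob mu by apply: marg_emp_prob.
have np : is_prob nu0 by apply: marg_nu_prob.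
have q0 i u : 0 <= q i u by case: (hpi (tag i) (s i) mu mp) => h _; apply: h.
have q1 i : \sum_u q i u = 1 by case: (hpi (tag i) (s i) mu mp).
have [i0 _] := agent_ex.
have U0 : (0 < #|U|)%N := nonempty_of_prob _ _ (hpi (tag i0) (s i0) mu mp).
have Npp := @Np_gt0 R K N Np0.
set f := fun (j : 'I_1) i u => r (tag i) (s i) u mu nu0.
set Z := fun a : {ffun Ag -> U} => \sum_(j < 1) `|Np^-1 * \sum_i (f j i (a i) - \sum_t q i t * f j i t)|.
have mm : l1dist mu mu = 0 by apply: big1 => x _; rewrite subrr normr0.
have pt : forall a : {ffun Ag -> U},
   `| Np^-1 * \sum_i r (tag i) (s i) (a i) mu (marg (@emp R K N U a))
          - \sum_k rMF r pit (emp s) k |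
   <= LR * l1dist (marg (@emp R K N U a)) nu0 + Z a.
  move=> a; rewrite rMF_sum // /Z big_ord1.
  have -> : Np^-1 * \sum_i r (tag i) (s i) (a i) mu (marg (emp a)) -
      Np^-1 * \sum_i \sum_u pit (tag i) (s i) (marg (emp s)) u *
        r (tag i) (s i) u (marg (emp s)) (marg (nuMF pit (emp s))) =
      Np^-1 * \sum_i (r (tag i) (s i) (a i) mu (marg (emp a)) - r (tag i) (s i) (a i) mu nu0)
      + Np^-1 * \sum_i (f ord0 i (a i) - \sum_t q i t * f ord0 i t).
    rewrite -mulrDr -mulrBr -big_split /= -sumrB; congr (_ * _).
    by apply: eq_bigr => i _; rewrite /f /q /mu /nu0; ring.
  apply: le_trans (ler_normD _ _) _; rewrite lerD2r.
  have Ni0 : 0 <= Np^-1 by rewrite invr_ge0 ltW.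
  rewrite normrM ger0_norm //.
  apply: (@le_trans _ _ (Np^-1 * \sum_(i : Ag) LR * l1dist (marg (emp a)) nu0)).
    rewrite ler_wpM2l //; apply: le_trans (ler_norm_sum _ _ _) _.
    apply: ler_sum => i _; have := hrL (tag i) (s i) (a i) mu mu (marg (emp a)) nu0 mp
       (@marg_emp_prob R K N Np0 U a) mp np.
    by rewrite mm add0r.
  have -> : \sum_(i : Ag) LR * l1dist (marg (emp a)) nu0 = LR * l1dist (marg (emp a)) nu0 * Np.
    by rewrite -(@sum_agent1 R K N) [RHS]mulr_sumr; apply: eq_bigr => i _; rewrite mulr1.
  rewrite mulrC mulfK //.
  exact: (@Np_neq0 R K N Np0).
apply: (@le_trans _ _ (\sum_a act_prob pit s a * (LR * l1dist (marg (@emp R K N U a)) nu0 + Z a))).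
  by apply: ler_sum => a _; apply: ler_wpM2l; [apply: prodr_ge0 => i _; apply: q0 | apply: pt].
under eq_bigr do rewrite mulrDr mulrCA.
rewrite big_split /= -mulr_sumr.
have Ha := part_a_s pit hpi s.
have Hb := @conc_pw R Ag U 'I_1 q f MR Np q0 q1 MR0 Npp (ltac:(by rewrite card_ord)).
have Hb' : \sum_a act_prob pit s a * Z a <= MR * Num.sqrt #|'I_1|%:R / Num.sqrt Np.
  apply: Hb.
  rewrite big_ord1 -(@sum_agent1 R K N) mulr_sumr; apply: ler_sum => i _.
  apply: (@le_trans _ _ (\sum_u q i u * MR ^+ 2)).
    apply: ler_sum => u _; apply: ler_wpM2l => //.
    rewrite -real_normK ?num_real // !expr2 ler_pM //.
      by apply: hrb.
    by apply: hrb.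
  by rewrite -mulr_suml q1 mul1r mulr1.
rewrite card_ord sqrtr1 mulr1 in Hb'.
apply: le_trans (lerD (ler_wpM2l (ltW LR0) Ha) Hb') _.
have su1 := sqrt_ge1 _ U0.
have sn0 : 0 < Num.sqrt Np by rewrite sqrtr_gt0.
rewrite -subr_ge0.
have -> : (MR + LR) * Num.sqrt #|U|%:R / Num.sqrt Np -
  (LR * (Num.sqrt #|U|%:R / Num.sqrt Np) + MR / Num.sqrt Np) =
  MR * (Num.sqrt #|U|%:R - 1) / Num.sqrt Np.
  by field; rewrite gt_eqF.
by rewrite divr_ge0 ?(ltW sn0) // mulr_ge0 ?(ltW MR0) // subr_ge0.
Qed.

Lemma prob_le1 (T : finType) (p : {ffun T -> R}) y : is_prob p -> p y <= 1.
Proof.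
case=> p0 p1; rewrite -p1 (bigD1 y) //= lerDl sumr_ge0 // => z _; exact: p0.
Qed.

Lemma part_c_s (pit : @policy_t R X U K)
  (hpi : forall k x m, is_prob m -> is_prob (pit k x m))
  (P : @kernel_t R X U K) (LP : R) (LP0 : 0 < LP)
  (hPp : forall k x u (m : {ffun X -> R}) (n : {ffun U -> R}),
      is_prob m -> is_prob n -> is_prob (P k x u m n))
  (hPL : forall k x u (m1 m2 : {ffun X -> R}) (n1 n2 : {ffun U -> R}),
      is_prob m1 -> is_prob n1 -> is_prob m2 -> is_prob n2 ->
      l1dist (P k x u m1 n1) (P k x u m2 n2) <= LP * (l1dist m1 m2 + l1dist n1 n2))
  (s : {ffun Ag -> X}) :
  \sum_a act_prob pit s a *
       \sum_(s' : {ffun Ag -> X}) trans_prob P s a s' *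
         l1dist (marg (@emp R K N X s')) (marg (PMF P pit (@emp R K N X s)))
     <= (2 + LP) * Num.sqrt (#|X|%:R * #|U|%:R) / Num.sqrt Np.
Proof.
set mu := marg (@emp R K N X s).
set nu0 := marg (nuMF pit (@emp R K N X s)).
set q := fun i u => pit (tag i) (s i) mu u.
have mp : is_prob mu by apply: marg_emp_prob.
have np : is_prob nu0 by apply: marg_nu_prob.
have q0 i u : 0 <= q i u by case: (hpi (tag i) (s i) mu mp) => h _; apply: h.
have q1 i : \sum_u q i u = 1 by case: (hpi (tag i) (s i) mu mp).
have [i0 _] := agent_ex.
have U0 : (0 < #|U|)%N := nonempty_of_prob _ _ (hpi (tag i0) (s i0) mu mp).
have X0 : (0 < #|X|)%N by apply/card_gt0P; exists (s i0).
have Npp := @Np_gt0 R K N Np0.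
have Ni0 : 0 <= Np^-1 by rewrite invr_ge0 ltW.
set sN := Num.sqrt Np.
set sx := Num.sqrt (#|X|%:R : R).
set su := Num.sqrt (#|U|%:R : R).
set pt := fun i u x => P (tag i) (s i) u mu nu0 x.
have pt0 i u x : 0 <= pt i u x by case: (hPp (tag i) (s i) u mu nu0 mp np) => h _; apply: h.
have pt1 i u : \sum_x pt i u x = 1 by case: (hPp (tag i) (s i) u mu nu0 mp np).
set f3 := fun (x' : X) i u => pt i u x'.
set S3 := fun a : {ffun Ag -> U} =>
  \sum_x' `|Np^-1 * \sum_i (f3 x' i (a i) - \sum_t q i t * f3 x' i t)|.
set f1 := fun (x' : X) (i : Ag) (t : X) => ((t == x')%:R : R).
have inner : forall a : {ffun Ag -> U},
  \sum_(s' : {ffun Ag -> X}) trans_prob P s a s' *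
         l1dist (marg (@emp R K N X s')) (marg (PMF P pit (@emp R K N X s)))
  <= sx / sN + (LP * l1dist (marg (@emp R K N U a)) nu0 + S3 a).
  move=> a.
  set nua := marg (@emp R K N U a).
  have nap : is_prob nua by apply: marg_emp_prob.
  set p := fun i x => P (tag i) (s i) (a i) mu nua x.
  have p0 i x : 0 <= p i x by case: (hPp (tag i) (s i) (a i) mu nua mp nap) => h _; apply: h.
  have p1 i : \sum_x p i x = 1 by case: (hPp (tag i) (s i) (a i) mu nua mp nap).
  set S1 := fun s' : {ffun Ag -> X} =>
    \sum_x' `|Np^-1 * \sum_i (f1 x' i (s' i) - \sum_t p i t * f1 x' i t)|.
  have mid : \sum_x' `|Np^-1 * \sum_i (p i x' - pt i (a i) x')| <= LP * l1dist nua nu0.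
    apply: (@le_trans _ _ (\sum_x' Np^-1 * \sum_i `|p i x' - pt i (a i) x'|)).
      apply: ler_sum => x' _; rewrite normrM ger0_norm // ler_wpM2l //.
      exact: ler_norm_sum.
    rewrite -mulr_sumr exchange_big /=.
    apply: (@le_trans _ _ (Np^-1 * \sum_(i : Ag) LP * l1dist nua nu0)).
      rewrite ler_wpM2l //; apply: ler_sum => i _.
      have := hPL (tag i) (s i) (a i) mu mu nua nu0 mp nap mp np.
      have mm : l1dist mu mu = 0 by apply: big1 => x _; rewrite subrr normr0.
      by rewrite mm add0r.
    have -> : \sum_(i : Ag) LP * l1dist nua nu0 = LP * l1dist nua nu0 * Np.
      by rewrite -(@sum_agent1 R K N) [RHS]mulr_sumr; apply: eq_bigr => i _; rewrite mulr1.
    by rewrite mulrC mulfK // (@Np_neq0 R K N Np0).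
  have pt_s : forall s' : {ffun Ag -> X}, l1dist (marg (@emp R K N X s')) (marg (PMF P pit (@emp R K N X s)))
     <= S1 s' + (LP * l1dist nua nu0 + S3 a).
    move=> s'; apply: le_trans (lerD (lexx (S1 s')) (lerD mid (lexx (S3 a)))).
    rewrite /S1 /S3 -!big_split /=; apply: ler_sum => x' _.
    rewrite marg_emp // PMF_marg // -/mu -/nu0.
    have -> : Np^-1 * \sum_i (s' i == x')%:R -
      Np^-1 * \sum_i \sum_u pit (tag i) (s i) mu u * P (tag i) (s i) u mu nu0 x' =
      Np^-1 * \sum_i (f1 x' i (s' i) - \sum_t p i t * f1 x' i t) +
      (Np^-1 * \sum_i (p i x' - pt i (a i) x') +
       Np^-1 * \sum_i (f3 x' i (a i) - \sum_t q i t * f3 x' i t)).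
      rewrite -!mulrDr -mulrBr -!big_split /= -sumrB; congr (_ * _).
      apply: eq_bigr => i _; rewrite /f1 /f3 sum_indr /pt /q; ring.
    by apply: le_trans (ler_normD _ _) _; rewrite lerD2l; apply: ler_normD.
  apply: (@le_trans _ _ (\sum_(s' : {ffun Ag -> X}) trans_prob P s a s' *
      (S1 s' + (LP * l1dist nua nu0 + S3 a)))).
    apply: ler_sum => s' _; apply: ler_wpM2l; last exact: pt_s.
    by apply: prodr_ge0 => i _; apply: p0.
  under eq_bigr do rewrite mulrDr.
  rewrite big_split /= -mulr_suml (@pw_sum R _ _ _ p1) mul1r lerD2r.
  have := @conc_pw R Ag X X p f1 1 Np p0 p1 ltr01 Npp X0.
  rewrite mul1r => H; apply: le_trans (H _); first by rewrite le_eqVlt eqxx.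
  under eq_bigr do under eq_bigr do under eq_bigr do rewrite /f1 ind2.
  rewrite exchange_big /= expr1n mul1r -(@sum_agent1 R K N); apply: ler_sum => i _.
  rewrite exchange_big /=.
  under eq_bigr do rewrite -mulr_sumr sum_ind mulr1.
  by rewrite p1.
apply: (@le_trans _ _ (\sum_a act_prob pit s a *
   (sx / sN + (LP * l1dist (marg (@emp R K N U a)) nu0 + S3 a)))).
  by apply: ler_sum => a _; apply: ler_wpM2l; [apply: prodr_ge0 => i _; apply: q0 | apply: inner].
under eq_bigr do rewrite mulrDr mulrDr.
rewrite !big_split /= -mulr_suml.
under [X in _ + (X + _)]eq_bigr do rewrite mulrCA.
rewrite -mulr_sumr.
rewrite (_ : \sum_a act_prob pit s a = 1); last exact: (@pw_sum R _ _ _ q1).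
rewrite mul1r.
have Ha := part_a_s pit hpi s.
have H3 : \sum_a act_prob pit s a * S3 a <= 1 * sx / sN.
  apply: (@conc_pw R Ag U X q f3 1 Np q0 q1 ltr01 Npp X0).
  rewrite expr1n mul1r -(@sum_agent1 R K N) exchange_big /=; apply: ler_sum => i _.
  rewrite exchange_big /=.
  apply: (@le_trans _ _ (\sum_u q i u * 1)); last by rewrite -mulr_suml q1 mul1r.
  apply: ler_sum => u _; rewrite -mulr_sumr ler_wpM2l // -(pt1 i u).
  apply: ler_sum => x _; rewrite /f3 expr2 -[X in _ <= X]mulr1 ler_wpM2l //.
  exact: (prob_le1 _ _ _ (hPp (tag i) (s i) u mu nu0 mp np)).
rewrite mul1r in H3.
apply: le_trans (lerD (lexx _) (lerD (ler_wpM2l (ltW LP0) Ha) H3)) _.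
have sx1 : 1 <= sx := sqrt_ge1 _ X0.
have su1 : 1 <= su := sqrt_ge1 _ U0.
have sn0 : 0 < sN by rewrite sqrtr_gt0.
rewrite sqrtrM ?ler0n // -/sx -/su -subr_ge0.
have -> : (2 + LP) * (sx * su) / sN - (sx / sN + (LP * (su / sN) + sx / sN)) =
   (2 * sx * (su - 1) + LP * su * (sx - 1)) / sN.
  by field; rewrite gt_eqF.
rewrite divr_ge0 ?(ltW sn0) // addr_ge0 // mulr_ge0 ?subr_ge0 //.
- by rewrite mulr_ge0 // (le_trans ler01 sx1).
- by rewrite mulr_ge0 ?(ltW LP0) // (le_trans ler01 su1).
Qed.
End Main.

Lemma avg_le (R : rcfType) (T : finType) (L F : T -> R) (B : R) :
  (forall s, 0 <= L s) -> \sum_s L s = 1 -> (forall s, F s <= B) ->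
  \sum_s L s * F s <= B.
Proof.
move=> L0 L1 HF; apply: (@le_trans _ _ (\sum_s L s * B)).
  by apply: ler_sum => s _; apply: ler_wpM2l.
by rewrite -mulr_suml L1 mul1r.
Qed.

Lemma law_prob (R : rcfType) (X U : finType) (K : nat) (N : 'I_K -> nat)
  (P : @kernel_t R X U K) (pi : nat -> @policy_t R X U K)
  (p0 : {ffun {ffun @Agent K N -> X} -> R}) :
  (0 < @Npop K N)%N ->
  (forall k x u (m : {ffun X -> R}) (n : {ffun U -> R}),
      is_prob m -> is_prob n -> is_prob (P k x u m n)) ->
  (forall t k x (m : {ffun X -> R}), is_prob m -> is_prob (pi t k x m)) ->
  is_prob p0 -> forall t, is_prob (law P pi p0 t).
Proof.
move=> Np0 hPp hpi hp0; elim=> [|t [IH0 IH1]] //=.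
have actp : forall s : {ffun @Agent K N -> X}, (forall a, 0 <= act_prob (pi t) s a) /\
    \sum_a act_prob (pi t) s a = 1.
  move=> s; have mp := @marg_emp_prob R K N Np0 X s.
  have q0 i u : 0 <= pi t (tag i) (s i) (marg (emp s)) u.
    by case: (hpi t (tag i) (s i) _ mp) => h _; apply: h.
  have q1 i : \sum_u pi t (tag i) (s i) (marg (emp s)) u = 1.
    by case: (hpi t (tag i) (s i) _ mp).
  split; first by move=> a; apply: prodr_ge0 => i _; apply: q0.
  exact: (@pw_sum R _ _ _ q1).
have trp : forall (s : {ffun @Agent K N -> X}) (a : {ffun @Agent K N -> U}),
    (forall s', 0 <= trans_prob P s a s') /\ \sum_s' trans_prob P s a s' = 1.
  move=> s a; have mp := @marg_emp_prob R K N Np0 X s.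
  have np := @marg_emp_prob R K N Np0 U a.
  have q0 i x : 0 <= P (tag i) (s i) (a i) (marg (emp s)) (marg (emp a)) x.
    by case: (hPp (tag i) (s i) (a i) _ _ mp np) => h _; apply: h.
  have q1 i : \sum_x P (tag i) (s i) (a i) (marg (emp s)) (marg (emp a)) x = 1.
    by case: (hPp (tag i) (s i) (a i) _ _ mp np).
  split; first by move=> s'; apply: prodr_ge0 => i _; apply: q0.
  exact: (@pw_sum R _ _ _ q1).
split.
  move=> s'; rewrite ffunE; apply: sumr_ge0 => s _; apply: mulr_ge0 => //.
  apply: sumr_ge0 => a _; apply: mulr_ge0; first by case: (actp s).
  by case: (trp s a).
under eq_bigr do rewrite ffunE.
rewrite exchange_big /= -IH1; apply: eq_bigr => s _.
rewrite -mulr_sumr -[RHS]mulr1; congr (_ * _).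
rewrite exchange_big /=; case: (actp s) => _ <-; apply: eq_bigr => a _.
by rewrite -mulr_sumr; case: (trp s a) => _ ->; rewrite mulr1.
Qed.

Theorem lemma12 (R : rcfType) (X U : finType) (K : nat) (N : 'I_K -> nat)
  (MR LR LP : R)
  (r : @reward_t R X U K) (P : @kernel_t R X U K)
  (pi : nat -> @policy_t R X U K)
  (p0 : {ffun {ffun @Agent K N -> X} -> R}) :
  (0 < K)%N -> (forall k, 0 < N k)%N ->
  0 < MR -> 0 < LR -> 0 < LP ->
  (forall k x u (m : {ffun X -> R}) (n : {ffun U -> R}),
      is_prob m -> is_prob n -> `|r k x u m n| <= MR) ->
  (forall k x u (m1 m2 : {ffun X -> R}) (n1 n2 : {ffun U -> R}),
      is_prob m1 -> is_prob n1 -> is_prob m2 -> is_prob n2 ->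
      `|r k x u m1 n1 - r k x u m2 n2| <= LR * (l1dist m1 m2 + l1dist n1 n2)) ->
  (forall k x u (m : {ffun X -> R}) (n : {ffun U -> R}),
      is_prob m -> is_prob n -> is_prob (P k x u m n)) ->
  (forall k x u (m1 m2 : {ffun X -> R}) (n1 n2 : {ffun U -> R}),
      is_prob m1 -> is_prob n1 -> is_prob m2 -> is_prob n2 ->
      l1dist (P k x u m1 n1) (P k x u m2 n2) <= LP * (l1dist m1 m2 + l1dist n1 n2)) ->
  (forall t k x (m : {ffun X -> R}), is_prob m -> is_prob (pi t k x m)) ->
  is_prob p0 ->
  forall t : nat,
  [/\
   (* (a) *)
   \sum_(s : {ffun Agent -> X}) law P pi p0 t s *
     \sum_(a : {ffun Agent -> U}) act_prob (pi t) s a *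
       l1dist (marg (emp a)) (marg (nuMF (pi t) (emp s)))
     <= Num.sqrt (#|U|%:R) / Num.sqrt ((@Npop K N)%:R),
   (* (b) *)
   \sum_(s : {ffun Agent -> X}) law P pi p0 t s *
     \sum_(a : {ffun Agent -> U}) act_prob (pi t) s a *
       `| ((@Npop K N)%:R)^-1 *
            \sum_(i : Agent) r (tag i) (s i) (a i) (marg (emp s)) (marg (emp a))
          - \sum_(k < K) rMF r (pi t) (emp s) k |
     <= (MR + LR) * Num.sqrt (#|U|%:R) / Num.sqrt ((@Npop K N)%:R) &
   (* (c) *)
   \sum_(s : {ffun Agent -> X}) law P pi p0 t s *
     \sum_(a : {ffun Agent -> U}) act_prob (pi t) s a *
       \sum_(s' : {ffun Agent -> X}) trans_prob P s a s' *
         l1dist (marg (emp s')) (marg (PMF P (pi t) (emp s)))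
     <= (2 + LP) * Num.sqrt (#|X|%:R * #|U|%:R) / Num.sqrt ((@Npop K N)%:R)].
Proof.
move=> K0 HN MR0 LR0 LP0 hrb hrL hPp hPL hpi hp0 t.
have Np0 : (0 < @Npop K N)%N.
  by rewrite /Npop (bigD1 (Ordinal K0)) //= ltn_addr // HN.
have [L0 L1] := @law_prob R X U K N P pi p0 Np0 hPp hpi hp0 t.
have hpit := hpi t.
split; apply: avg_le => // s.
- exact: (@part_a_s R X U K N Np0 (pi t) hpit s).
- exact: (@part_b_s R X U K N Np0 (pi t) hpit r MR LR MR0 LR0 hrb hrL s).
- exact: (@part_c_s R X U K N Np0 (pi t) hpit P LP LP0 hPp hPL s).
Qed.
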